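(* Let $n,m,p\in\mathbb{N}$ with $m\ge p$, $A\in\mathbb{R}^{n\times n}$, $B\in\mathbb{R}^{n\times m}$, $C\in\mathbb{R}^{p\times n}$, and let $f:\mathbb{R}\times\mathbb{R}^n\times\mathbb{R}^m\to\mathbb{R}^n$ be continuous and bounded. Assume: (P1) $L\in\mathcal{C}^\infty(\mathbb{R}\to\mathbb{R}^{m\times m})$ is such that $L,\dot L,\ldots,L^{(n)}$ are bounded and there is $q\in\mathbb{N}$ with $\operatorname{rk} BL(t)=q\ge p$ for all $t\in\mathbb{R}$; (P2) there is $r\in\mathbb{N}$ such that $CA^kBL(t)=0$ for all $t\in\mathbb{R}$ and $CA^kf(t,x,u)=0$ for all $(t,x,u)\in\mathbb{R}\times\mathbb{R}^n\times\mathbb{R}^m$, for $k=0,\ldots,r-2$, and the matrix $\Gamma:=CA^{r-1}B\in\mathbb{R}^{p\times m}$ satisfies $\operatorname{rk}\Gamma L(t)=p$ for all $t\in\mathbb{R}$. Let $\mathcal{B}(t)$, $\mathcal{C}$, $\rho$, $V$, $\mathcal{N}(t)$ and $U(t)$ be defined as in the context. Then for all $t\in\mathbb{R}$ we have $\rho=\operatorname{rk}\mathcal{C}=\operatorname{rk}\mathcal{C}\mathcal{B}(t)=pr$, and, viewing $\mathcal{C}\mathcal{B}(t)\in\mathbb{R}^{rp\times rm}$ as an $r\times r$ block matrix with blocks $(\mathcal{C}\mathcal{B}(t))_{i,j}\in\mathbb{R}^{p\times m}$, $i,j=1,\ldots,r$, we have $(\mathcal{C}\mathcal{B}(t))_{i,j}=0$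 whenever $i+j\le r$ and $(\mathcal{C}\mathcal{B}(t))_{i,j}=(-1)^{j-1}\Gamma L(t)$ whenever $i+j=r+1$ (the blocks with $i+j>r+1$ are not specified). Furthermore, $U(t)$ is invertible for all $t\in\mathbb{R}$ with $$U(t)^{-1}=\big[\mathcal{B}(t)\big(\mathcal{C}\mathcal{B}(t)\big)^\dagger,\ V\big].$$
   Context: $M^\dagger$ denotes the Moore–Penrose pseudoinverse and $\operatorname{rk}$ the rank. For a matrix function $M$, $(\tfrac{d}{dt}-A)(M(t)):=\dot M(t)-AM(t)$, applied iteratively for powers. Define for $t\in\mathbb{R}$: $\mathcal{B}(t):=\big[BL(t),\ (\tfrac{d}{dt}-A)(BL(t)),\ \ldots,\ (\tfrac{d}{dt}-A)^{r-1}(BL(t))\big]\in\mathbb{R}^{n\times rm}$; $\mathcal{C}:=\big[C^\top,(CA)^\top,\ldots,(CA^{r-1})^\top\big]^\top\in\mathbb{R}^{rp\times n}$; $\rho:=\operatorname{rk}\mathcal{C}$; $V\in\mathbb{R}^{n\times(n-\rho)}$ any matrix with $\operatorname{im}V=\ker\mathcal{C}$; $\mathcal{N}(t):=V^\dagger\big[I_n-\mathcal{B}(t)(\mathcal{C}\mathcal{B}(t))^\dagger\mathcal{C}\big]\in\mathbb{R}^{(n-\rho)\times n}$; $U(t):=\begin{bmatrix}\mathcal{C}\\ \mathcal{N}(t)\end{bmatrix}\in\mathbb{R}^{(n-\rho+pr)\times n}$. *)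

(* Defs.v *)
From HB Require Import structures.
From mathcomp Require Import all_boot all_order all_algebra.
From mathcomp Require Import all_classical all_reals all_analysis.
Unset Printing Implicit Defensive.
Import Order.TTheory GRing.Theory Num.Theory.
Import numFieldNormedType.Exports.
Local Open Scope classical_set_scope.
Local Open Scope ring_scope.

Section Defs.
Context {R : realType}.

Definition is_pinv {a b} (M : 'M[R]_(a, b)) (X : 'M[R]_(b, a)) : Prop :=
  [/\ M *m X *m M = M, X *m M *m X = X,
      (M *m X)^T = M *m X & (X *m M)^T = X *m M].

(* Moore-Penrose pseudoinverse M^dagger (the unique X with is_pinv M X;
   it exists over the reals). *)
Definition pinv {a b} (M : 'M[R]_(a, b)) : 'M[R]_(b, a) :=
  xget 0 [set X | is_pinv M X].

Definition dA {n c} (A : 'M[R]_n) (M : R -> 'M[R]_(n, c)) : R -> 'M[R]_(n, c) :=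
  fun t => derive1 M t - A *m M t.

Definition calB {n m} (A : 'M[R]_n) (B : 'M[R]_(n, m)) (L : R -> 'M[R]_m)
  (r : nat) (t : R) : 'M[R]_(n, \sum_(j < r) m) :=
  \mxrow_(j < r) (iter j (dA A) (fun s => B *m L s) t).

Definition calC {n p} (A : 'M[R]_n) (C : 'M[R]_(p, n)) (r : nat)
  : 'M[R]_(\sum_(i < r) p, n) :=
  \mxcol_(i < r) (C *m A ^+ i).

Definition rho {n p} (A : 'M[R]_n) (C : 'M[R]_(p, n)) (r : nat) : nat :=
  \rank (calC A C r).

(* block (i,j) (0-indexed) of script C * script B(t), viewed as an r x r block
   matrix with blocks in R^{p x m} *)
Definition CBblock {n m p} (A : 'M[R]_n) (B : 'M[R]_(n, m)) (C : 'M[R]_(p, n))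
  (L : R -> 'M[R]_m) (r : nat) (t : R) (i j : 'I_r) : 'M[R]_(p, m) :=
  @submxblock R r r (fun _ => p) (fun _ => m) (calC A C r *m calB A B L r t) i j.

Definition calN {n m p} (A : 'M[R]_n) (B : 'M[R]_(n, m)) (C : 'M[R]_(p, n))
  (L : R -> 'M[R]_m) (r : nat) (V : 'M[R]_(n, n - rho A C r)) (t : R)
  : 'M[R]_(n - rho A C r, n) :=
  pinv V *m (1%:M - calB A B L r t *m pinv (calC A C r *m calB A B L r t)
                     *m calC A C r).

Definition calU {n m p} (A : 'M[R]_n) (B : 'M[R]_(n, m)) (C : 'M[R]_(p, n))
  (L : R -> 'M[R]_m) (r : nat) (V : 'M[R]_(n, n - rho A C r)) (t : R)
  : 'M[R]_(\sum_(i < r) p + (n - rho A C r), n) :=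
  col_mx (calC A C r) (calN A B C L r V t).

Definition calUinv {n m p} (A : 'M[R]_n) (B : 'M[R]_(n, m)) (C : 'M[R]_(p, n))
  (L : R -> 'M[R]_m) (r : nat) (V : 'M[R]_(n, n - rho A C r)) (t : R)
  : 'M[R]_(n, \sum_(i < r) p + (n - rho A C r)) :=
  row_mx (calB A B L r t *m pinv (calC A C r *m calB A B L r t)) V.

End Defs.

(* Main.v *)
Require Import Defs.
From HB Require Import structures.
From mathcomp Require Import all_boot all_order all_algebra.
From mathcomp Require Import all_classical all_reals all_analysis.
From mathcomp Require Import zify.
Import Order.TTheory GRing.Theory Num.Theory.
Import numFieldNormedType.Exports.
Local Open Scope classical_set_scope.
Local Open Scope ring_scope.

Section Helpers.
Variable R : realType.

Lemma der_mulmx {a b c} (P : 'M[R]_(a, b)) (g : R -> 'M[R]_(b, c)) t :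
  derivable g t 1 ->
  derivable (fun s => P *m g s) t 1 /\
  derive1 (fun s => P *m g s) t = P *m derive1 g t.
Proof.
move=> dg.
have dge : forall k j, derivable (fun s => g s k j) t 1 by apply/derivable_mxP.
have E : forall i j, (fun s => (P *m g s) i j) =
    \sum_(k < b) (fun s => P i k * g s k j).
  by move=> i j; rewrite fct_sumE; apply/funext => s; rewrite mxE.
have dE : forall i j, derivable (fun s => (P *m g s) i j) t 1.
  move=> i j; rewrite E; apply: derivable_sum => k.
  exact: (derivableM (derivable_cst _ _ _) (dge k j)).
have dPg : derivable (fun s => P *m g s) t 1 by apply/derivable_mxP.
split=> //.
rewrite !derive1E derive_mx // derive_mx //; apply/matrixP => i j.
rewrite !mxE E derive_sum; last first.
  by move=> k; exact: (derivableM (derivable_cst _ _ _) (dge k j)).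
apply: eq_bigr => k _; rewrite mxE.
by rewrite (deriveMl (P i k) (dge k j)).
Qed.

Definition rep {n m} (L : R -> 'M[R]_m) (s : seq ('M[R]_(n, m) * nat)) :=
  fun t => \sum_(x <- s) x.1 *m derive1n x.2 L t.

Lemma rep_der {n m} (L : R -> 'M[R]_m)
  (L_smooth : forall (k : nat) (t : R), derivable (derive1n k L) t 1)
  (s : seq ('M[R]_(n, m) * nat)) t :
  derivable (rep L s) t 1 /\
  derive1 (rep L s) t = rep L [seq (x.1, x.2.+1) | x <- s] t.
Proof.
elim: s => [|x s [IH1 IH2]].
  have -> : rep L [::] = (cst 0 : R -> 'M[R]_(n, m)) by apply/funext => u; rewrite /rep big_nil.
  by split; [exact: derivable_cst | rewrite derive1_cst /rep /=].
have -> : rep L (x :: s) = (fun u : R => x.1 *m derive1n x.2 L u) + rep L s :> (R -> 'M[R]_(n, m)).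
  by apply/funext => u; rewrite /rep big_cons.
have [d1 e1] := (der_mulmx x.1 _ t (L_smooth x.2 t)).
split; first exact: derivableD.
rewrite derive1E deriveD // -!derive1E e1 IH2 /rep /= big_cons.
by rewrite derive1nS.
Qed.

Lemma iter_rep {n m} (A : 'M[R]_n) (B : 'M[R]_(n, m)) (L : R -> 'M[R]_m)
  (L_smooth : forall (k : nat) (t : R), derivable (derive1n k L) t 1) j :
  exists s, iter j (dA A) (fun s => B *m L s) = rep L s.
Proof.
elim: j => [|j [s IH]].
  exists [:: (B, 0%N)]; apply/funext => u.
  by rewrite /rep /= big_cons big_nil addr0 derive1n0.
exists ([seq (x.1, x.2.+1) | x <- s] ++ [seq (- (A *m x.1), x.2) | x <- s]).
apply/funext => u; rewrite iterS IH /dA.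
have [_ ->] := rep_der _ L_smooth s u.
rewrite /rep big_cat /= !big_map mulmx_sumr -sumrN; congr (_ + _).
by apply: eq_bigr => x _; rewrite mulmxA mulNmx.
Qed.


Section Blocks.
Variables (n m p : nat) (A : 'M[R]_n) (B : 'M[R]_(n, m)) (C : 'M[R]_(p, n))
  (L : R -> 'M[R]_m)
  (L_smooth : forall (k : nat) (t : R), derivable (derive1n k L) t 1)
  (r : nat)
  (hBL : forall k : nat, (k.+2 <= r)%N ->
     forall t, C *m A ^+ k *m (B *m L t) = 0).

Let Mj j := iter j (dA A) (fun s => B *m L s).

Lemma Mj_der j t : derivable (Mj j) t 1.
Proof. by rewrite /Mj; have [s ->] := iter_rep A B _ L_smooth j; case: (rep_der _ L_smooth s t). Qed.

Lemma CM_der (P : 'M[R]_(p, n)) j t :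
  P *m derive1 (Mj j) t = derive1 (fun s => P *m Mj j s) t.
Proof. by have [_ ->] := der_mulmx P _ t (Mj_der j t). Qed.

Lemma Zblock j : forall i, (i + j + 2 <= r)%N -> forall t,
  C *m A ^+ i *m Mj j t = 0.
Proof.
elim: j => [|j IH] i hij t.
  by rewrite /Mj /=; apply: hBL; rewrite addn0 addn2 in hij.
rewrite /Mj iterS -/(Mj j) /dA mulmxBr CM_der.
have -> : (fun s => C *m A ^+ i *m Mj j s) = (cst 0 : R -> 'M[R]_(p, m)).
  by apply/funext => s; apply: IH; lia.
rewrite derive1_cst sub0r mulmxA -(mulmxA C) -[A ^+ i *m A]/(A ^+ i * A) -exprSr IH ?oppr0 //; lia.

Qed.

Lemma NZblock j : forall i, (i + j + 1 = r)%N -> forall t,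
  C *m A ^+ i *m Mj j t = (-1) ^+ j *: (C *m A ^+ r.-1 *m B *m L t).
Proof.
elim: j => [|j IH] i hij t.
  by rewrite /Mj /= expr0 scale1r mulmxA -hij addn0 addn1.
rewrite /Mj iterS -/(Mj j) /dA mulmxBr CM_der.
have -> : (fun s => C *m A ^+ i *m Mj j s) = (cst 0 : R -> 'M[R]_(p, m)).
  by apply/funext => s; apply: Zblock; lia.
rewrite derive1_cst sub0r (mulmxA (C *m A ^+ i) A) -(mulmxA C (A ^+ i) A) -[A ^+ i *m A]/(A ^+ i * A) -exprSr IH; last by lia.
by rewrite exprS mulN1r scaleNr.
Qed.

End Blocks.

Lemma unit_MMT a b (M : 'M[R]_(a, b)) : row_free M -> M *m M^T \in unitmx.
Proof.
move=> fM; rewrite -row_free_unit; apply: inj_row_free => v.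
rewrite mulmxA => h.
have hw : (v *m M) *m (v *m M)^T = 0 by rewrite trmx_mul mulmxA h mul0mx.
have w0 : v *m M = 0.
  move: hw; set w := v *m M => hw.
  apply/matrixP => i j; rewrite ord1 [RHS]mxE.
  move/matrixP: hw => /(_ 0 0); rewrite [X in X = _]mxE [RHS]mxE => hs.
  have nn : forall k : 'I_b, true -> 0 <= w 0 k * w^T k 0.
    by move=> k _; rewrite [w^T _ _]mxE -expr2 sqr_ge0.
  have := @psumr_eq0P _ _ _ _ nn hs j isT.
  by rewrite [w^T _ _]mxE => /eqP; rewrite mulf_eq0 orbb => /eqP.
by apply/eqP; rewrite -(mulmx_free_eq0 _ fM); apply/eqP.
Qed.


Lemma pinv_rowfree_ex {a b} (M : 'M[R]_(a, b)) : row_free M ->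
  is_pinv M (M^T *m invmx (M *m M^T)).
Proof.
move=> fM; have u := @unit_MMT _ _ M fM.
have MX : M *m (M^T *m invmx (M *m M^T)) = 1%:M by rewrite mulmxA mulmxV.
split.
- by rewrite MX mul1mx.
- by rewrite -mulmxA MX mulmx1.
- by rewrite MX trmx1.
- by rewrite !trmx_mul trmx_inv trmx_mul trmxK !mulmxA.
Qed.

Lemma is_pinv_tr {a b} (M : 'M[R]_(a, b)) X : is_pinv M X -> is_pinv M^T X^T.
Proof.
case=> h1 h2 h3 h4; split.
- by rewrite -!trmx_mul mulmxA h1.
- by rewrite -!trmx_mul mulmxA h2.
- by rewrite -trmx_mul h4.
- by rewrite -trmx_mul h3.
Qed.

Lemma pinvP {a b} (M : 'M[R]_(a, b)) : (exists X, is_pinv M X) -> is_pinv M (Defs.pinv M).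
Proof. by move=> ex; rewrite /Defs.pinv; exact: xgetPex. Qed.

Lemma rowfree_pinv {a b} (M : 'M[R]_(a, b)) : row_free M -> M *m Defs.pinv M = 1%:M.
Proof.
move=> fM; have [h1 _ _ _] := pinvP _ (ex_intro _ _ (pinv_rowfree_ex _ fM)).
have [Y hY] := row_freeP fM.
by rewrite -[LHS]mulmx1 -hY mulmxA h1.
Qed.

Lemma colfree_pinv {a b} (M : 'M[R]_(a, b)) : row_free M^T -> Defs.pinv M *m M = 1%:M.
Proof.
move=> fM; have := pinv_rowfree_ex _ fM => /is_pinv_tr; rewrite trmxK => hp.
have [h1 _ _ _] := pinvP _ (ex_intro _ _ hp).
have [Y hY] := row_freeP fM.
apply: trmx_inj; rewrite trmx1 trmx_mul.
by rewrite -[LHS]mulmx1 -hY mulmxA -trmx_mul -trmx_mul mulmxA h1.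
Qed.

Lemma dim_inv k n (e : k = n) (U : 'M[R]_(k, n)) (W : 'M[R]_(n, k)) :
  U *m W = 1%:M -> W *m U = 1%:M.
Proof. by subst k; apply: mulmx1C. Qed.

End Helpers.

Lemma aux_blocks (R : realType) k n l j j' (Cc : 'M[R]_(k, n)) (Bb : 'M[R]_(n, l))
  (X : 'M[R]_(l, k)) (P : 'M[R]_(j, n)) (Vv : 'M[R]_(n, j')) :
  Cc *m Bb *m X = 1%:M -> Cc *m Vv = 0 ->
  P *m (1%:M - Bb *m X *m Cc) *m (Bb *m X) = 0 /\
  P *m (1%:M - Bb *m X *m Cc) *m Vv = P *m Vv.
Proof.
move=> h hv.
have h' : forall a (Y : 'M[R]_(a, k)), Y *m Cc *m Bb *m X = Y.
  by move=> a Y; rewrite -!mulmxA (mulmxA Cc) h mulmx1.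
split.
  by rewrite -mulmxA mulmxBl mul1mx !mulmxA h' subrr mulmx0.
by rewrite -mulmxA mulmxBl mul1mx -(mulmxA _ Cc) hv mulmx0 subr0.
Qed.

Theorem lemma1 (R : realType) (n m p : nat) (hmp : (p <= m)%N)
  (A : 'M[R]_n) (B : 'M[R]_(n, m)) (C : 'M[R]_(p, n))
  (f : R -> 'cV[R]_n -> 'cV[R]_m -> 'cV[R]_n)
  (f_cont : continuous (fun z : R * 'cV[R]_n * 'cV[R]_m => f z.1.1 z.1.2 z.2))
  (f_bnd : exists M : R, forall t x u, `|f t x u| <= M)
  (L : R -> 'M[R]_m)
  (L_smooth : forall (k : nat) (t : R), derivable (derive1n k L) t 1)
  (L_bnd : forall k : nat, (k <= n)%N ->
     exists M : R, forall t, `|derive1n k L t| <= M)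
  (q : nat) (hqp : (p <= q)%N) (hq : forall t, \rank (B *m L t) = q)
  (r : nat) (hr : (1 <= r)%N)
  (hBL : forall k : nat, (k.+2 <= r)%N ->
     forall t, C *m A ^+ k *m (B *m L t) = 0)
  (hf : forall k : nat, (k.+2 <= r)%N ->
     forall t x u, C *m A ^+ k *m f t x u = 0)
  (hGamma : forall t, \rank (C *m A ^+ r.-1 *m B *m L t) = p)
  (V : 'M[R]_(n, n - rho A C r))
  (hV : forall x : 'cV[R]_n,
     calC A C r *m x = 0 <-> exists y : 'cV[R]_(n - rho A C r), x = V *m y) :
  forall t : R,
    [/\ rho A C r = (p * r)%N,
        \rank (calC A C r *m calB A B L r t) = (p * r)%N,
        (forall i j : 'I_r, (i + j + 2 <= r)%N -> CBblock A B C L r t i j = 0),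
        (forall i j : 'I_r, (i + j + 1)%N = r ->
           CBblock A B C L r t i j = (-1) ^+ j *: (C *m A ^+ r.-1 *m B *m L t))
      & calU A B C L r V t *m calUinv A B C L r V t = 1%:M
        /\ calUinv A B C L r V t *m calU A B C L r V t = 1%:M].
Proof.
move=> t.
set M := calC A C r *m calB A B L r t.
have Mblk : M = \mxblock_(i < r, j < r)
    (C *m A ^+ i *m iter j (dA A) (fun s => B *m L s) t).
  by rewrite /M /calC /calB mul_mxcol_mxrow.
have hZ : forall i j : 'I_r, (i + j + 2 <= r)%N -> CBblock A B C L r t i j = 0.
  move=> i j h; rewrite /CBblock -/M Mblk mxblockK.
  exact: (@Zblock R n m p A B C L L_smooth r hBL j i h t).
have hNZ : forall i j : 'I_r, (i + j + 1)%N = r ->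
    CBblock A B C L r t i j = (-1) ^+ j *: (C *m A ^+ r.-1 *m B *m L t).
  move=> i j h; rewrite /CBblock -/M Mblk mxblockK.
  exact: (@NZblock R n m p A B C L L_smooth r hBL j i h t).
have fG : row_free (C *m A ^+ r.-1 *m B *m L t) by rewrite /row_free hGamma.
have fM : row_free M.
  apply: inj_row_free => v hv.
  have hv' : \mxrow_i (submxrow v i) *m M = 0 by rewrite submxrowK.
  rewrite Mblk mul_mxrow_mxblock in hv'.
  have hcol : forall j : 'I_r, \sum_(i < r) submxrow v i *m
      CBblock A B C L r t i j = 0.
    move=> j; have := congr1 (fun X => submxrow X j) hv'.
    rewrite /= mxrowK submxrow0 => H; apply: etrans H; apply: eq_bigr => i _.
    by rewrite /CBblock -/M Mblk mxblockK.
  have P : forall k, forall i : 'I_r, (r <= i + k)%N -> submxrow v i = 0.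
    elim=> [|k IH] i hik; first by have := ltn_ord i; lia.
    have [hik'|hik'] := leqP r (i + k); first exact: IH.
    have kr : (k < r)%N by lia.
    have := hcol (Ordinal kr).
    rewrite (bigD1 i) //= big1 ?addr0; last first.
      move=> i' ne; have [h1|h1] := leqP (i' + k + 2) r.
        by rewrite hZ ?mulmx0.
      rewrite IH ?mul0mx //.
      have : i' != i :> nat by [].
      lia.
    rewrite hNZ /=; last by lia.
    move/eqP; rewrite -scalemxAr scaler_eq0 signr_eq0 /= mulmx_free_eq0 //.
    by move/eqP.
  rewrite -(submxrowK v); rewrite -mxrow0; apply: eq_mxrow => i.
  by apply: (P r); lia.
have sumE : (\sum_(i < r) p = p * r)%N by rewrite big_const_ord iter_addn_0.
have rkM : \rank M = (p * r)%N by rewrite (eqP fM) sumE.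
have rho_pr : rho A C r = (p * r)%N.
  apply/eqP; rewrite eqn_leq; apply/andP; split.
    by rewrite /rho -sumE rank_leq_row.
  by rewrite -rkM /rho mxrankM_maxl.
have rho_n : (rho A C r <= n)%N by rewrite /rho rank_leq_col.
have CV : calC A C r *m V = 0.
  apply/matrixP => i k.
  have := (hV (V *m delta_mx k 0)).2 (ex_intro _ _ erefl).
  by rewrite mulmxA -colE => /matrixP/(_ i 0); rewrite !mxE.
have fV : row_free V^T.
  rewrite /row_free.
  have E : (V^T == kermx (calC A C r)^T)%MS.
    apply/andP; split.
      by apply/sub_kermxP; rewrite -trmx_mul CV trmx0.
    apply/row_subP => k.
    have hk : row k (kermx (calC A C r)^T) *m (calC A C r)^T = 0.
      by apply/sub_kermxP; exact: row_sub.
    have hk' : calC A C r *m (row k (kermx (calC A C r)^T))^T = 0.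
      by apply: trmx_inj; rewrite trmx_mul trmxK hk trmx0.
    have [y hy] := (hV (row k (kermx (calC A C r)^T))^T).1 hk'.
    by apply/submxP; exists y^T; rewrite -trmx_mul -hy trmxK.
  by rewrite (eqmxP E) mxrank_ker mxrank_tr.
have MX : M *m Defs.pinv M = 1%:M := @rowfree_pinv R _ _ M fM.
have PV : Defs.pinv V *m V = 1%:M := @colfree_pinv R _ _ V fV.
have [a1 a2] := @aux_blocks R _ _ _ _ _ (calC A C r) (calB A B L r t) (Defs.pinv M) (Defs.pinv V) V MX CV.
have UU : calU A B C L r V t *m calUinv A B C L r V t = 1%:M.
  rewrite /calU /calUinv /calN -/M mul_col_row.
  rewrite (scalar_mx_block (\sum_(i < r) p) (n - rho A C r)).
  by rewrite mulmxA -/M MX CV a1 a2 PV.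
split; [exact: rho_pr | exact: rkM | exact: hZ | exact: hNZ | split => //].
apply: dim_inv UU.
by rewrite sumE -rho_pr subnKC.
Qed.
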